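(* Let $d\ge 2$ and let $f(t,s)=s^d+\sum_{i=1}^{d}\binom{x_i}{i}t^{i}s^{d-i}$, where $x_i\ge i-1$ are real numbers with $\binom{x_i}{i}>0$ for all $i$, and suppose $x_d\ge d$. If $f(t,s)$ is Lorentzian, then $x_1\ge x_2\ge\cdots\ge x_d$.
   Context: For real $x$ and integer $k\ge0$, $\binom{x}{k}=\frac{x(x-1)\cdots(x-k+1)}{k!}$. A homogeneous polynomial $p$ of degree $d\ge2$ in variables $z_1,\dots,z_n$ with nonnegative real coefficients is Lorentzian if its support (the set of exponent vectors of monomials with nonzero coefficient) is M-convex, and for every $\alpha\in\mathbb{Z}_{\ge0}^n$ with $|\alpha|=d-2$ the quadratic form $\partial^{\alpha}p$ has at most one positive eigenvalue. (For bivariate $p=\sum_{i=0}^d a_i t^i s^{d-i}$ with $a_i\ge0$, this is equivalent to the sequence $(a_i)$ having no internal zeros and satisfying $\big(a_i/\binom{d}{i}\big)^2\ge \frac{a_{i-1}}{\binom{d}{i-1}}\frac{a_{i+1}}{\binom{d}{i+1}}$ for $1\le i\le d-1$.) *)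

(* Defs.v *)
From HB Require Import structures.
From mathcomp Require Import all_boot all_order all_algebra.
From mathcomp.multinomials Require Import mpoly.
Set Implicit Arguments. Unset Strict Implicit. Unset Printing Implicit Defensive.
Import Order.TTheory GRing.Theory Num.Theory.
Local Open Scope ring_scope.

Definition rbinom (R : fieldType) (x : R) (k : nat) : R :=
  (\prod_(j < k) (x - j%:R)) / (k`!)%:R.

Definition Mconvex (n : nat) (S : seq 'X_{1..n}) : Prop :=
  forall a b : 'X_{1..n}, a \in S -> b \in S ->
  forall i : 'I_n, (b i < a i)%N ->
  exists2 j : 'I_n, (a j < b j)%N & (a - U_(i) + U_(j))%MM \in S.

(* Symmetric matrix A of a quadratic form q, i.e. q(z) = z^T A z
   (A = Hessian of q divided by 2). *)
Definition qform_matrix (R : fieldType) (n : nat) (q : {mpoly R[n]}) : 'M[R]_n :=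
  \matrix_(i < n, j < n) (((q^`M(j))^`M(i))@_0%MM / 2%:R).

(* A (square) matrix has at most one positive eigenvalue, counted with
   multiplicity: there are no two positive eigenvalues l1, l2 (equal or not)
   with (X - l1)(X - l2) dividing the characteristic polynomial. *)
Definition at_most_one_pos_eigenvalue (R : numFieldType) (n : nat)
  (M : 'M[R]_n) : Prop :=
  ~ exists l1 l2 : R, [/\ 0 < l1, 0 < l2 &
      (('X - l1%:P) * ('X - l2%:P) %| char_poly M)%R].

Definition Lorentzian (R : numFieldType) (n d : nat) (p : {mpoly R[n]}) : Prop :=
  [/\ forall m : 'X_{1..n}, 0 <= p@_m,
      forall m : 'X_{1..n}, m \in msupp p -> mdeg m = d,
      Mconvex (msupp p) &
      forall a : 'X_{1..n}, mdeg a = (d - 2)%N ->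
        at_most_one_pos_eigenvalue (qform_matrix (p^`M[a]))].

Definition tvar : 'I_2 := @Ordinal 2 0 isT.
Definition svar : 'I_2 := @Ordinal 2 1 isT.

Definition fpoly (R : fieldType) (d : nat) (x : nat -> R) : {mpoly R[2]} :=
  'X_svar ^+ d +
  \sum_(1 <= i < d.+1) rbinom (x i) i *: ('X_tvar ^+ i * 'X_svar ^+ (d - i)).

(* Main.v *)
Require Import Defs.
From HB Require Import structures.
From mathcomp Require Import all_boot all_order all_algebra.
From mathcomp.multinomials Require Import mpoly.
From mathcomp Require Import ring lra zify.
Import Order.TTheory GRing.Theory Num.Theory.
Local Open Scope ring_scope.

Lemma charp2 (R : comNzRingType) (M : 'M[R]_2) :
  char_poly M = ('X - (M 0 0)%:P) * ('X - (M 1 1)%:P) - (M 0 1)%:P * (M 1 0)%:P.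
Proof.
rewrite /char_poly /char_poly_mx (expand_det_row _ 0) !big_ord_recl big_ord0.
rewrite /cofactor !det_mx11 !mxE /=.
have -> : (lift 0 0 : 'I_2) = 1 by apply/val_inj.
rewrite /= !mulr1n !mulr0n expr0 expr1 !mul1r addr0 sub0r.
rewrite (_ : (0 : 'I_2) = ord0) //.
rewrite (_ : lift 1 0 = ord0); last by apply/val_inj.
ring.
Qed.
Lemma two_pos (R : rcfType) (M : 'M[R]_2) : at_most_one_pos_eigenvalue M ->
  0 <= M 0 0 -> 0 <= M 1 1 -> M 0 1 = M 1 0 -> M 0 0 * M 1 1 <= M 0 1 ^+ 2.
Proof.
move=> H p0 r0 sym; rewrite leNgt; apply/negP => hlt; apply: H.
have E : forall a b : R, ('X - a%:P)*('X - b%:P) = 'X*'X - (a+b)%:P * 'X + (a*b)%:P.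
  by move=> a b; rewrite polyCD polyCM; ring.
rewrite charp2 -sym E -polyCM.
move: p0 r0 hlt; set p := M 0 0; set r := M 1 1; set q := M 0 1 => p0 r0 hlt.
pose s := Num.sqrt ((p-r)^+2 + 4 * q^+2).
have s0: 0 <= s by apply: sqrtr_ge0.
have s2: s^+2 = (p-r)^+2 + 4 * q^+2.
  by rewrite sqr_sqrtr // addr_ge0 ?sqr_ge0 // mulr_ge0 ?sqr_ge0.
have pr0 : 0 < p * r by nra.
have prs : 0 < p + r by nra.
have slt : s < p + r by nra.
exists ((p+r+s)/2), ((p+r-s)/2); split.
- lra.
- lra.
rewrite E.
have -> : (p + r + s) / 2 + (p + r - s) / 2 = p + r by field.
have -> : (p + r + s) / 2 * ((p + r - s) / 2) = p * r - q * q.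
  have -> : (p + r + s) / 2 * ((p + r - s) / 2) = ((p+r)^+2 - s^+2)/4 by field.
  by rewrite s2; field.
by rewrite polyCB addrA dvdpp.
Qed.
Definition mon (d i : nat) : 'X_{1..2} := (U_(tvar) *+ i + U_(svar) *+ (d - i))%MM.

Lemma monE d i : (mon d i) tvar = i /\ (mon d i) svar = (d - i)%N.
Proof. by rewrite !mnmDE !mulmnE !mnm1E /= ?mul1n ?mul0n ?addn0 ?add0n. Qed.

Lemma rbinom0 (R : fieldType) (y : R) : rbinom y 0 = 1.
Proof. by rewrite /rbinom big_ord0 fact0 divr1. Qed.

Lemma fpoly_sum (R : fieldType) d (x : nat -> R) :
  fpoly d x = \sum_(i < d.+1) rbinom (x i) i *: 'X_[mon d i].
Proof.
rewrite /fpoly big_ord_recl rbinom0 scale1r /mon mulm0n add0m subn0 mpolyXn.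
congr (_ + _); rewrite big_add1 /= big_mkord; apply: eq_bigr => i _.
by rewrite mpolyXD !mpolyXn.
Qed.

Lemma coef_f (R : fieldType) d (x : nat -> R) (m : 'X_{1..2}) :
  (m tvar <= d)%N -> m svar = (d - m tvar)%N ->
  (fpoly d x)@_m = rbinom (x (m tvar)) (m tvar).
Proof.
move=> le ms; rewrite fpoly_sum raddf_sum /=.
have lt : (m tvar < d.+1)%N by [].
rewrite (bigD1 (Ordinal lt)) //= big1 ?addr0.
  rewrite mcoeffZ mcoeffX.
  have -> : mon d (m tvar) = m.
    apply/mnmP => l; case: l => [[|[|//]]] pl.
      have -> : Ordinal pl = tvar by apply/val_inj.
      by case: (monE d (m tvar)).
    have -> : Ordinal pl = svar by apply/val_inj.
    by case: (monE d (m tvar)) => _ ->.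
  by rewrite eqxx mulr1.
move=> i ne; rewrite mcoeffZ mcoeffX.
case: eqP => [E|]; last by rewrite mulr0.
exfalso; move/eqP: ne; apply; apply/val_inj => /=.
by rewrite -E; case: (monE d i).
Qed.
Lemma entry (R : fieldType) (q : {mpoly R[2]}) i l :
  qform_matrix q i l = q@_(U_(i) + U_(l))%MM *+ ((U_(i))%MM l).+1 / 2%:R.
Proof.
by rewrite /qform_matrix mxE !mcoeff_mderiv mnm0E add0m.
Qed.

Lemma coefd (R : fieldType) (p : {mpoly R[2]}) k e (m : 'X_{1..2}) :
  (p^`M[(U_(tvar) *+ k + U_(svar) *+ e)%MM])@_m =
  p@_(U_(tvar) *+ k + U_(svar) *+ e + m)%MM *+ ((k + m tvar) ^_ k * (e + m svar) ^_ e).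
Proof.
rewrite mcoeff_mderivm !big_ord_recl big_ord0 muln1.
rewrite !mnmDE !mulmnE !mnm1E /=.
rewrite !mul1n !mul0n !addn0 !add0n.
have -> : (ord0 : 'I_2) = tvar by apply/val_inj.
by rewrite (_ : lift _ _ = svar) //; apply/val_inj.
Qed.
Definition Fv (R : fieldType) (d : nat) (x : nat -> R) j :=
  rbinom (x j) j * (j`!)%:R * ((d - j)`!)%:R.

Arguments Fv {R}.

Lemma lc (R : rcfType) d k e (x : nat -> R) : d = (k.+2 + e)%N ->
  (forall j, (j <= d)%N -> 0 <= rbinom (x j) j) ->
  Lorentzian d (fpoly d x) ->
  @Fv R d x k * @Fv R d x k.+2 <= @Fv R d x k.+1 ^+ 2.
Proof.
move=> -> pos [_ _ _ HL].
have hdeg : mdeg (U_(tvar) *+ k + U_(svar) *+ e)%MM = (k.+2 + e - 2)%N.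
  rewrite mdegD !mdegMn !mdeg1 !mul1n; lia.
move: (HL _ hdeg) => /two_pos.
rewrite (_ : (0:'I_2) = tvar); last by apply/val_inj.
rewrite (_ : (1:'I_2) = svar); last by apply/val_inj.
rewrite !entry !coefd.
rewrite !coef_f; rewrite ?mnmDE ?mulmnE ?mnm1E /= ?mul1n ?mul0n ?addn0 ?add0n; try lia.
rewrite -[(1+1)%N]/2%N !addn2 !addn1 => H.
have a2 : 0 <= rbinom (x k.+2) k.+2 by apply: pos; lia.
have a0 : 0 <= rbinom (x k) k by apply: pos; lia.
have {H} H := H (divr_ge0 (mulrn_wge0 _ (mulrn_wge0 _ a2)) (ler0n _ 2))
  (divr_ge0 (mulrn_wge0 _ (mulrn_wge0 _ a0)) (ler0n _ 2)) erefl.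
rewrite /Fv.
have -> : (k.+2 + e - k = e.+2)%N by lia.
have -> : (k.+2 + e - k.+1 = e.+1)%N by lia.
have -> : (k.+2 + e - k.+2 = e)%N by lia.
have ff : forall n m, (m <= n)%N -> (n`!)%:R = (n^_m)%:R * ((n-m)`!)%:R :> R.
  by move=> n m le; rewrite -natrM ffact_fact.
rewrite (ff k.+2 k); last lia.
rewrite (ff e.+2 e); last lia.
rewrite (ff k.+1 k); last lia.
rewrite (ff e.+1 e); last lia.
rewrite -!ffactnn.
rewrite (_ : (k.+2 - k)%N = 2%N); last by lia.
rewrite (_ : (e.+2 - e)%N = 2%N); last by lia.
rewrite (_ : (k.+1 - k)%N = 1%N); last by lia.
rewrite (_ : (e.+1 - e)%N = 1%N); last by lia.
move: H; rewrite -!(mulr_natr (rbinom _ _)) -!(mulr_natr (_ * _)) !natrM.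
set A0 := rbinom _ k; set A1 := rbinom _ k.+1; set A2 := rbinom _ k.+2.
set N1 := (k.+2 ^_ k)%:R; set N2 := (e ^_ e)%:R; set N3 := (k ^_ k)%:R.
set N4 := (e.+2 ^_ e)%:R; set N5 := (k.+1 ^_ k)%:R; set N6 := (e.+1 ^_ e)%:R.
move=> H. rewrite /= ?mulr1 in H *.
have E1 : A0 * N3 * (N4 * 2) * (A2 * (N1 * 2) * N2) = 4 * (A2 * (N1 * N2) * 2 / 2 * (A0 * (N3 * N4) * 2 / 2)) by field.
have E2 : (A1 * N5 * N6) ^+ 2 = 4 * (A1 * (N5 * N6) / 2) ^+ 2 by field.
by rewrite E1 E2 ler_pM2l.
Qed.
Section Seq.
Variables (R : realFieldType) (b : nat -> R) (d : nat).
Hypothesis bpos : forall j, (j <= d)%N -> 0 < b j.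
Hypothesis blc : forall j, (0 < j < d)%N -> b j.-1 * b j.+1 <= b j ^+ 2.

Lemma ratio j i : (j <= i)%N -> (i < d)%N -> b i.+1 * b j <= b i * b j.+1.
Proof.
elim: i => [|i IH] hji hid.
  by move: hji; rewrite leqn0 => /eqP ->; rewrite mulrC.
have [->|ne] := eqVneq j i.+1; first by rewrite mulrC.
have hji' : (j <= i)%N by lia.
have := IH hji' (ltnW hid).
have := blc i.+1 ltac:(lia); rewrite /= => L I.
have p0 := bpos i ltac:(lia).
have p1 := bpos i.+1 ltac:(lia).
have p2 := bpos i.+2 ltac:(lia).
have pj := bpos j ltac:(lia).
have pj1 := bpos j.+1 ltac:(lia).
nra.
Qed.

Lemma powr i m : (i < d)%N -> (m <= i)%N -> b i.+1 ^+ m * b (i - m) <= b i ^+ m.+1.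
Proof.
move=> hid; elim: m => [|m IH] hm; first by rewrite expr0 mul1r subn0 expr1.
have := ratio (i - m.+1) i ltac:(lia) hid.
have -> : (i - m.+1).+1 = (i - m)%N by lia.
move=> Rt.
have IH' := IH ltac:(lia).
have pi1 := bpos i.+1 ltac:(lia).
have pi := bpos i ltac:(lia).
have P0 : 0 <= b i.+1 ^+ m by rewrite exprn_ge0 ?ltW.
rewrite [b i.+1 ^+ m.+1]exprS [b i ^+ m.+2]exprS.
move: P0 IH' Rt; set P := b i.+1 ^+ m; set Q := b i ^+ m.+1 => P0 IH' Rt.
nra.
Qed.

Hypothesis b0 : b 0 = 1.
Hypothesis bd : 1 <= b d.

Lemma bge1 i : (i <= d)%N -> 1 <= b i.
Proof.
case: i => [|i] hid; first by rewrite b0.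
have [le|lt] := leP (b i) (b i.+1).
  suff: forall m, (m <= i.+1)%N -> 1 <= b m by apply.
  elim=> [|m IH] hm; first by rewrite b0.
  apply: (le_trans (IH (ltnW hm))).
  have := ratio m i ltac:(lia) ltac:(lia).
  have pm := bpos m ltac:(lia).
  have pi := bpos i ltac:(lia).
  have pm1 := bpos m.+1 ltac:(lia).
  move=> Rt; nra.
suff: forall m, (i.+1 + m <= d)%N -> b (i.+1 + m) <= b i.+1.
  move/(_ (d - i.+1)%N); rewrite subnKC // => H; apply: le_trans bd _; exact: H.
elim=> [|m IH] hm; first by rewrite addn0.
apply: le_trans (IH ltac:(lia)).
have := ratio i (i.+1 + m%N) ltac:(lia) ltac:(lia).
rewrite addnS.
have pi := bpos i ltac:(lia).
have pk := bpos (i.+1 + m%N) ltac:(lia).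
move=> Rt; nra.
Qed.

End Seq.
Definition G (R : fieldType) (d : nat) (y : R) (i : nat) :=
  \prod_(k < i) ((y - (k : nat)%:R) / (d%:R - (k : nat)%:R)).

Arguments G {R}.

Lemma FvG (R : numFieldType) d (x : nat -> R) j : (j <= d)%N ->
  Fv d x j / (d`!)%:R = G d (x j) j.
Proof.
move=> le; rewrite /Fv /rbinom /G prodf_div.
have -> : (d`!)%:R = (d ^_ j)%:R * ((d - j)`!)%:R :> R by rewrite -natrM ffact_fact.
have -> : (d ^_ j)%:R = \prod_(k < j) (d%:R - (k : nat)%:R) :> R.
  rewrite ffact_prod natr_prod; apply: eq_bigr => k _; rewrite natrB //.
  by have := ltn_ord k; lia.
have h1 : (j`!)%:R != 0 :> R by rewrite pnatr_eq0 -lt0n fact_gt0.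
have h2 : ((d - j)`!)%:R != 0 :> R by rewrite pnatr_eq0 -lt0n fact_gt0.
have h3 : \prod_(k < j) (d%:R - (k : nat)%:R) != 0 :> R.
  rewrite prodf_seq_neq0; apply/allP => k _ /=; rewrite subr_eq0 eqr_nat.
  by have := ltn_ord k; lia.
field.
by rewrite h3 h1 h2.
Qed.

Lemma G_bound (R : realFieldType) d (y : R) i : (i < d)%N -> d%:R <= y ->
  G d y i <= ((y - i%:R) / (d%:R - i%:R)) ^+ i.
Proof.
move=> lid hy; rewrite /G -[X in _ <= _ ^+ X](card_ord i) -prodr_const.
apply: ler_prod => k _.
have kd : ((k : nat)%:R < d%:R :> R) by rewrite ltr_nat; have := ltn_ord k; lia.
have ki : ((k : nat)%:R <= i%:R :> R) by rewrite ler_nat; have := ltn_ord k; lia.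
have id : (i%:R < d%:R :> R) by rewrite ltr_nat.
apply/andP; split.
  by apply: divr_ge0; lra.
rewrite ler_pdivlMr ?subr_gt0 // mulrAC ler_pdivrMr ?subr_gt0 //.
nra.
Qed.

Lemma G_ge_d (R : realFieldType) d (y : R) i : (1 <= i)%N -> (i <= d)%N ->
  i%:R - 1 <= y -> 1 <= G d y i -> d%:R <= y.
Proof.
move=> i1 id yi hG; rewrite leNgt; apply/negP => yd.
case: i i1 id yi hG => [//|i] _ id yi.
rewrite /G big_ord_recr /= => hG.
have a1 : \prod_(k < i) ((y - (k : nat)%:R) / (d%:R - (k : nat)%:R)) <= 1.
  rewrite -[X in _ <= X](expr1n R i) -[X in _ <= _ ^+ X](card_ord i) -prodr_const.
  apply: ler_prod => k _.
  have kd : ((k : nat)%:R + 1 < d%:R :> R).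
    by rewrite natr1 ltr_nat; have := ltn_ord k; lia.
  have ki : ((k : nat)%:R + 1 <= i%:R :> R).
    by rewrite natr1 ler_nat; have := ltn_ord k; lia.
  move: yi; rewrite -natr1 => yi.
  apply/andP; split; first by apply: divr_ge0; lra.
  by rewrite ler_pdivrMr ?subr_gt0; lra.
have a0 : 0 <= \prod_(k < i) ((y - (k : nat)%:R) / (d%:R - (k : nat)%:R)).
  apply: prodr_ge0 => k _.
  have kd : ((k : nat)%:R + 1 < d%:R :> R).
    by rewrite natr1 ltr_nat; have := ltn_ord k; lia.
  have ki : ((k : nat)%:R + 1 <= i%:R :> R).
    by rewrite natr1 ler_nat; have := ltn_ord k; lia.
  move: yi; rewrite -natr1 => yi.
  by apply: divr_ge0; lra.
have id' : (i%:R < d%:R :> R) by rewrite ltr_nat.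
move: yi; rewrite -natr1 => yi.
have c0 : 0 <= (y - i%:R) / (d%:R - i%:R) by apply: divr_ge0; lra.
have c1 : (y - i%:R) / (d%:R - i%:R) < 1 by rewrite ltr_pdivrMr ?subr_gt0; lra.
move: a0 a1 hG; set A := \prod_(k < i) _ => a0 a1 hG.
nra.
Qed.

Lemma G_strict (R : realFieldType) d (y z : R) i : (i < d)%N -> d%:R <= y -> y < z ->
  (y - i%:R) / (d%:R - i%:R) * G d y i < G d z i.+1.
Proof.
move=> id yd yz; rewrite /G big_ord_recr /=.
have fac : forall k : 'I_i, 0 < (y - (k : nat)%:R) / (d%:R - (k : nat)%:R)
    <= (z - (k : nat)%:R) / (d%:R - (k : nat)%:R).
  move=> k.
  have kd : ((k : nat)%:R < d%:R :> R) by rewrite ltr_nat; have := ltn_ord k; lia.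
  apply/andP; split; first by apply: divr_gt0; lra.
  by rewrite ler_pM2r ?invr_gt0 ?subr_gt0 //; lra.
have A0 : 0 < \prod_(k < i) ((y - (k : nat)%:R) / (d%:R - (k : nat)%:R)).
  by apply: prodr_gt0 => k _; case/andP: (fac k).
have AA : \prod_(k < i) ((y - (k : nat)%:R) / (d%:R - (k : nat)%:R)) <=
          \prod_(k < i) ((z - (k : nat)%:R) / (d%:R - (k : nat)%:R)).
  apply: ler_prod => k _; case/andP: (fac k) => a b; by rewrite b ltW.
have id' : (i%:R < d%:R :> R) by rewrite ltr_nat.
have c0 : 0 <= (y - i%:R) / (d%:R - i%:R) by apply: divr_ge0; lra.
have cc : (y - i%:R) / (d%:R - i%:R) < (z - i%:R) / (d%:R - i%:R).
  by rewrite ltr_pM2r ?invr_gt0 ?subr_gt0 //; lra.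
move: A0 AA c0 cc.
set A := \prod_(k < i) _; set A' := \prod_(k < i) _; set c := _ / _; set c' := _ / _.
move=> A0 AA c0 cc; nra.
Qed.

Lemma G_ge1 (R : realFieldType) d (y : R) : d%:R <= y -> 1 <= G d y d.
Proof.
move=> yd; rewrite /G -[X in X <= _](expr1n R d) -[X in _ ^+ X <= _](card_ord d) -prodr_const.
apply: ler_prod => k _.
have kd : ((k : nat)%:R < d%:R :> R) by rewrite ltr_nat; have := ltn_ord k; lia.
by rewrite ler01 /= ler_pdivlMr ?subr_gt0 //; lra.
Qed.


Theorem mainTheorem4 (R : rcfType) (d : nat) (x : nat -> R) :
  (2 <= d)%N ->
  (forall i : nat, (1 <= i <= d)%N -> i%:R - 1 <= x i) ->
  (forall i : nat, (1 <= i <= d)%N -> 0 < rbinom (x i) i) ->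
  d%:R <= x d ->
  Lorentzian d (fpoly d x) ->
  forall i : nat, (1 <= i < d)%N -> x i.+1 <= x i.
Proof.
move=> d2 hx hpos hxd hL i hi.
have i0 : (0 < i)%N by case/andP: hi.
have hid : (i < d)%N by case/andP: hi.
have hid' : (i <= d)%N by apply: ltnW.
have hi1 : (0 < i <= d)%N by rewrite i0 hid'.
have D0 : 0 < (d`!)%:R :> R by rewrite ltr0n fact_gt0.
pose b j := Fv d x j / (d`!)%:R.
have b0 : b 0%N = 1.
  by rewrite /b /Fv rbinom0 fact0 subn0 !mul1r divff // lt0r_neq0.
have bpos : forall j, (j <= d)%N -> 0 < b j.
  case=> [|j] hj; first by rewrite b0.
  rewrite /b /Fv; apply: divr_gt0 => //; apply: mulr_gt0; last by rewrite ltr0n fact_gt0.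
  by apply: mulr_gt0; [apply: hpos; lia | rewrite ltr0n fact_gt0].
have pos : forall j, (j <= d)%N -> 0 <= rbinom (x j) j.
  case=> [|j] hj; first by rewrite rbinom0.
  by apply: ltW; apply: hpos; lia.
have blc : forall j, (0 < j < d)%N -> b j.-1 * b j.+1 <= b j ^+ 2.
  move=> j hj.
  have := @lc R d j.-1 (d - j.+1)%N x ltac:(lia) pos hL.
  rewrite (prednK (n:=j)); last by lia.
  move=> H; rewrite /b mulf_div expr_div_n -expr2.
  by apply: ler_wpM2r => //; rewrite invr_ge0 exprn_ge0 // ltW.
have bG : forall j, (j <= d)%N -> b j = G d (x j) j by move=> j hj; rewrite /b FvG.
have bd : 1 <= b d by rewrite bG // G_ge1.
have bi := @bge1 _ b d bpos blc b0 bd i hid'.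
have yd : d%:R <= x i.
  apply: (@G_ge_d R d (x i) i) => //; [exact: hx | by rewrite -bG].
rewrite leNgt; apply/negP => lt.
set q := (x i - i%:R) / (d%:R - i%:R).
have id' : (i%:R < d%:R :> R) by rewrite ltr_nat.
have q0 : 0 <= q by apply: divr_ge0; lra.
have h1 : b i <= q ^+ i by rewrite bG //; apply: G_bound.
have h2 : q * b i < b i.+1.
  rewrite bG // (bG i.+1) //.
  by apply: G_strict.
have h3 := @powr _ b d bpos blc i i hid (leqnn i).
rewrite subnn b0 mulr1 in h3.
have h4 : (q * b i) ^+ i < b i.+1 ^+ i.
  have bi0 : 0 < b i by apply: bpos.
  rewrite ltrXn2r //; first by rewrite -lt0n.
  by apply: mulr_ge0 => //; apply: ltW.
rewrite exprMn in h4.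
have P0 : 0 < b i ^+ i by rewrite exprn_gt0 //; apply: bpos.
rewrite exprS in h3.
move: h1 h3 h4 P0; set Q := q ^+ i; set P := b i ^+ i; set B := b i.+1 ^+ i.
move=> h1 h3 h4 P0.
have h5 := ler_wpM2r (ltW P0) h1.
have := lt_le_trans h4 (le_trans h3 h5).
by rewrite ltxx.
Qed.
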